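(* For every partition $\lambda$, $\tau_{p_\lambda}(x)=x^{\ell(\lambda)}(x-1)^{|\lambda|-\ell(\lambda)}$.
   Context: $p_\lambda=p_{\lambda_1}\cdots p_{\lambda_{\ell(\lambda)}}$ with $p_n=\sum_i x_i^n$ (power-sum symmetric functions); $|\lambda|$ is the size and $\ell(\lambda)$ the number of parts of $\lambda$. $P_\lambda$ is the disjoint union of paths with $\lambda_1,\dots,\lambda_{\ell(\lambda)}$ vertices, $X_G$ the chromatic symmetric function, and $\{X_{P_\lambda}\}$ is a basis of the symmetric functions over $\mathbb{Q}$. For $f=\sum_\lambda a_\lambda X_{P_\lambda}$, $\tau_f(x)=\sum_\lambda a_\lambda x^{\ell(\lambda)}$. *)

(* Defs.v *)
From HB Require Import structures.
From mathcomp Require Import all_boot all_algebra.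
From mathcomp Require Import mpoly.

Set Implicit Arguments.
Unset Strict Implicit.
Unset Printing Implicit Defensive.

Import GRing.Theory.
Local Open Scope ring_scope.

(* A partition: a weakly decreasing sequence of positive integers.
   |lambda| = sumn lambda, l(lambda) = size lambda. *)
Definition is_partition (l : seq nat) : bool :=
  sorted geq l && all (fun k => 0 < k)%N l.

(* Vertices of P_mu: pairs (i, j) with i < l(mu), j < mu_i
   (the j-th vertex of the i-th path). *)
Definition pathvert (mu : seq nat) : Type :=
  {x : 'I_(size mu) * 'I_(sumn mu) | (x.2 < nth 0 mu x.1)%N}.

Definition pathadj (mu : seq nat) : rel (pathvert mu) :=
  fun u v => ((val u).1 == (val v).1) &&
             ((((val u).2).+1 == (val v).2)%N || (((val v).2).+1 == (val u).2)%N).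

Definition chromsym (N : nat) (V : finType) (e : rel V) : {mpoly rat[N]} :=
  \sum_(k : {ffun V -> 'I_N} | [forall u, forall v, e u v ==> (k u != k v)])
     \prod_(v : V) 'X_(k v).

Definition XP (N : nat) (mu : seq nat) : {mpoly rat[N]} :=
  @chromsym N (pathvert mu) (@pathadj mu).

Definition psum (N k : nat) : {mpoly rat[N]} := \sum_(i < N) 'X_i ^+ k.
Definition powersum (N : nat) (l : seq nat) : {mpoly rat[N]} :=
  \prod_(k <- l) psum N k.

(* Main.v *)
Require Import Defs.
From HB Require Import structures.
From mathcomp Require Import all_boot all_algebra.
From mathcomp Require Import mpoly zify ring.
Set Implicit Arguments. Unset Strict Implicit. Unset Printing Implicit Defensive.

Section Count.
Variables (V : finType) (N M : nat) (par : V -> V) (root : pred V) (rk : V -> nat).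
Hypothesis hrk : forall v, ~~ root v -> rk (par v) < rk v.
Hypothesis hMN : M <= N.

Definition good (A : {set V}) (c : {ffun V -> 'I_N}) : bool :=
  [forall u in A, (c u < M) && (~~ root u ==> (c u != c (par u)))].

Definition upd (c : {ffun V -> 'I_N}) v (t : 'I_N) : {ffun V -> 'I_N} :=
  [ffun u => if u == v then t else c u].

Lemma card_ltM : #|[pred t : 'I_N | t < M]| = M.
Proof.
rewrite -sum1_card -[RHS](card_ord M) -sum1_card.
rewrite (big_ord_widen N (fun _ => 1%N) hMN) /=.
by apply: eq_bigl => i; rewrite inE.
Qed.

Lemma card_ltM_neq (a : 'I_N) : a < M -> #|[pred t : 'I_N | (t < M) && (t != a)]| = M.-1.
Proof.
move=> aM.
have h := cardD1 a [pred t : 'I_N | t < M].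
rewrite card_ltM inE aM /= in h.
rewrite [in RHS]h add1n /=; apply: eq_card => t; rewrite !inE andbC //.
Qed.


Lemma good_upd (A : {set V}) (c : {ffun V -> 'I_N}) (v : V) (t : 'I_N) : v \in A ->
  (forall u, u \in A -> u != v -> ~~ root u -> par u != v) ->
  (~~ root v -> par v != v) ->
  good A (upd c v t) = good (A :\ v) c && ((t < M) && (~~ root v ==> (t != c (par v)))).
Proof.
move=> hv hpar hpv.
rewrite /good; apply/forall_inP/andP => [H|[/forall_inP H1 /andP[tM tpar]]].
- split.
  + apply/forall_inP => u /setD1P [uv uA]. have := H u uA. rewrite !ffunE (negbTE uv).
    case: (boolP (root u)) => ru /=; first by rewrite !andbT.
    by rewrite (negbTE (hpar u uA uv ru)).
  + have := H v hv; rewrite !ffunE eqxx.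
    case: (boolP (root v)) => rv /=; first by rewrite !andbT.
    by rewrite (negbTE (hpv rv)).
- move=> u uA. rewrite !ffunE. case: (eqVneq u v) => [->|uv].
  + rewrite tM /=. case: (boolP (root v)) => rv //=.
    by rewrite (negbTE (hpv rv)); move: tpar; rewrite rv.
  + have := H1 u; rewrite !inE uv uA => /(_ isT).
    case: (boolP (root u)) => ru /=; first by rewrite !andbT.
    by rewrite (negbTE (hpar u uA uv ru)).
Qed.

Definition phi v (p : {ffun V -> 'I_N} * 'I_N) := (upd p.1 v p.2, p.1 v).

Lemma phiK v : involutive (phi v).
Proof.
move=> [c t]; rewrite /phi /=; congr (_, _); last by rewrite ffunE eqxx.
by apply/ffunP => u; rewrite !ffunE; case: eqVneq => // ->.
Qed.

Lemma card_good (A : {set V}) : #|[set c | good A c]| = \sum_c (good A c : nat).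
Proof. by rewrite -sum1_card big_mkcond /=; apply: eq_bigr => c _; rewrite inE; case: good. Qed.

Lemma key (A : {set V}) (v : V) : v \in A ->
  (forall u, u \in A -> u != v -> ~~ root u -> par u != v) ->
  (~~ root v -> par v != v) ->
  (~~ root v -> par v \in A :\ v) ->
  N * #|[set c | good A c]| = (if root v then M else M.-1) * #|[set c | good (A :\ v) c]|.
Proof.
move=> hv hpar hpv hpA.
rewrite !card_good big_distrr /=.
transitivity (\sum_(c : {ffun V -> 'I_N}) \sum_(t : 'I_N) (good A c : nat)).
  by apply: eq_bigr => c _; rewrite sum_nat_const card_ord mulnC.
rewrite pair_bigA /= (reindex_inj (inv_inj (phiK v))) /=.
rewrite -(pair_bigA _ (fun c t => (good A (upd c v t) : nat))) /=.
rewrite big_distrr /=; apply: eq_bigr => c _.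
under eq_bigr do rewrite good_upd //.
case: (boolP (good (A :\ v) c)) => gc /=; last by rewrite big1 ?muln0 // => t _.
rewrite muln1.
case: (boolP (root v)) => rv /=.
  rewrite -[M in RHS]card_ltM -sum1_card [RHS]big_mkcond /=.
  by apply: eq_bigr => t _; rewrite !inE andbT; case: (_ < _).
have pM : c (par v) < M.
  by move/forall_inP: gc => /(_ _ (hpA rv)) /andP[].
rewrite -(card_ltM_neq pM) -sum1_card [RHS]big_mkcond /=.
by apply: eq_bigr => t _; rewrite !inE; case: (_ && _).
Qed.


Lemma count_good (A : {set V}) : 0 < N -> (forall u, u \in A -> ~~ root u -> par u \in A) ->
  #|[set c | good A c]| =
  M ^ #|[set u in A | root u]| * M.-1 ^ #|[set u in A | ~~ root u]| * N ^ #|~: A|.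
Proof.
move=> N0.
have [n] := ubnP #|A|; elim: n A => // n IH A lenA hcl.
case: (set_0Vmem A) => [->|[u0 u0A]].
  rewrite setC0 cardsT.
  have -> : [set c | good set0 c] = [set: {ffun V -> 'I_N}].
    by apply/setP => c; rewrite !inE; apply/forall_inP => u; rewrite inE.
  rewrite cardsT card_ffun card_ord.
  have e0 : forall P : pred V, [set u in set0 | P u] = set0.
    by move=> P; apply/setP => u; rewrite !inE.
  by rewrite !e0 cards0 !expn0 !mul1n.
case: (arg_maxnP rk u0A) => v hv0 vmax.
have hv : v \in A := hv0.
have hpar : forall u, u \in A -> u != v -> ~~ root u -> par u != v.
  move=> u uA uv ru; apply/eqP => pu.
  by have := hrk ru; rewrite pu ltnNge; move: (vmax _ uA) => /= ->.
have hpv : ~~ root v -> par v != v.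
  by move=> rv; apply/eqP => pv; have := hrk rv; rewrite pv ltnn.
have hpA : ~~ root v -> par v \in A :\ v.
  by move=> rv; rewrite !inE hpv // hcl.
have hcl' : forall u, u \in A :\ v -> ~~ root u -> par u \in A :\ v.
  move=> u /setD1P [uv uA] ru; rewrite !inE hpar ?hcl //.
have lenA' : #|A :\ v| < n.
  by move: lenA; rewrite (cardsD1 v A) hv.
have E := key hv hpar hpv hpA.
rewrite (IH _ lenA' hcl') in E.
have eS : forall P : pred V, #|[set u in A | P u]| = (P v) + #|[set u in A :\ v | P u]|.
  move=> P; rewrite (cardsD1 v [set u in A | P u]) !inE hv /=; congr (_ + _).
  by apply: eq_card => u; rewrite !inE andbA.
have eC : #|~: (A :\ v)| = #|~: A|.+1.
  rewrite (cardsD1 v (~: (A :\ v))) !inE eqxx /= add1n; congr (_.+1).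
  apply: eq_card => u; rewrite !inE negb_and negbK.
  by case: eqVneq => //= ->; rewrite hv.
rewrite !eS eC in E *.
apply/eqP; rewrite -(eqn_pmul2l N0); apply/eqP; rewrite E.
case: (root v) => /=; rewrite !add0n ?add1n !expnS; ring.
Qed.

End Count.

Section PV.
Variable mu : seq nat.

Definition ppar (v : pathvert mu) : pathvert mu :=
  let: exist x hj := v in
  exist (fun x : 'I_(size mu) * 'I_(sumn mu) => (x.2 < nth 0 mu x.1)%N)
    (x.1, Ordinal (leq_ltn_trans (leq_pred x.2) (ltn_ord x.2)))
    (leq_ltn_trans (leq_pred x.2) hj).

Definition proot : pred (pathvert mu) := fun v => (val v).2 == 0%N :> nat.
Definition prk (v : pathvert mu) : nat := (val v).2.

Lemma ppar1 v : (val (ppar v)).1 = (val v).1.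
Proof. by case: v => [[i j] hj]. Qed.
Lemma ppar2 v : ((val (ppar v)).2 : nat) = ((val v).2).-1.
Proof. by case: v => [[i j] hj]. Qed.

Lemma prk_par v : ~~ proot v -> (prk (ppar v) < prk v)%N.
Proof. rewrite /proot /prk ppar2; case: (nat_of_ord _) => //= n _; exact: ltnSn. Qed.

Lemma ppar_eq (u w : pathvert mu) : (val u).1 = (val w).1 -> ((val u).2).+1 = (val w).2 :> nat -> ppar w = u.
Proof.
move=> e1 e2; apply: val_inj; move: e1 e2.
case: u => [[i j] hj]; case: w => [[i' j'] hj'] /= -> e2.
congr (_, _); apply: val_inj => /=; by rewrite -e2.
Qed.

Lemma proper_equiv N (k : {ffun pathvert mu -> 'I_N}) :
  [forall u, forall w, pathadj u w ==> (k u != k w)] =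
  [forall v, ~~ proot v ==> (k v != k (ppar v))].
Proof.
apply/forallP/forallP => H.
- move=> v; apply/implyP => rv.
  have /forallP /(_ v) /implyP := H (ppar v); rewrite eq_sym; apply.
  rewrite /pathadj ppar1 eqxx /= ppar2.
  by move: rv; rewrite /proot; case: (nat_of_ord (sval v).2) => //= n _; rewrite eqxx.
- move=> u; apply/forallP => w; apply/implyP => /andP[/eqP e1 /orP[] /eqP e2].
  + have /implyP := H w; rewrite (ppar_eq e1 e2) eq_sym; apply.
    by rewrite /proot -e2.
  + have /implyP := H u; rewrite (ppar_eq (esym e1) e2); apply.
    by rewrite /proot -e2.
Qed.


Lemma nth_le_sumn i : (nth 0 mu i <= sumn mu)%N.
Proof. elim: mu i => [|x s IH] [|i] //=; [lia | have := IH i; lia]. Qed.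

Lemma card_pv (Q : 'I_(sumn mu) -> bool) :
  #|[set v : pathvert mu | Q (val v).2]| =
  (\sum_(i < size mu) #|[set j : 'I_(sumn mu) | (j < nth 0 mu i) && Q j]|)%N.
Proof.
rewrite -(card_imset _ val_inj).
have -> : [set val x | x in [set v : pathvert mu | Q (val v).2]] =
          [set x : 'I_(size mu) * 'I_(sumn mu) | (x.2 < nth 0 mu x.1) && Q x.2].
  apply/setP => x; rewrite inE; apply/imsetP/idP.
  - by move=> [v]; rewrite inE => Qv ->; rewrite Qv (valP v).
  - by move=> /andP[h1 h2]; exists (exist _ x h1) => //; rewrite inE.
rewrite -sum1_card big_mkcond /=.
set S := [set x : 'I_(size mu) * 'I_(sumn mu) | _].
transitivity (\sum_(i < size mu) \sum_(j < sumn mu) (if (i, j) \in S then 1 else 0))%N.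
  by rewrite pair_bigA; apply: eq_bigr => -[i j].
apply: eq_bigr => i _; rewrite -sum1_card [RHS]big_mkcond /=.
by apply: eq_bigr => j _; rewrite !inE.
Qed.


Lemma card_pv_all : #|[set v : pathvert mu | true]| = sumn mu.
Proof.
rewrite (card_pv (fun _ => true)).
rewrite [RHS]sumnE (big_nth 0) big_mkord; apply: eq_bigr => i _.
transitivity #|[pred t : 'I_(sumn mu) | t < nth 0 mu i]|; last exact: card_ltM (nth_le_sumn i).
by apply: eq_card => j; rewrite !inE andbT.
Qed.

Lemma card_pv_root : all (fun k => 0 < k)%N mu ->
  #|[set v : pathvert mu | proot v]| = size mu.
Proof.
move=> hpos.
rewrite (card_pv (fun j => j == 0%N :> nat)).
transitivity (\sum_(i < size mu) (0 < nth 0 mu i : nat))%N.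
  apply: eq_bigr => i _.
  case: (posnP (nth 0 mu i)) => [->|m0].
    by apply: eq_card0 => j; rewrite !inE ltn0.
  have b0 : (0 < sumn mu)%N := leq_trans m0 (nth_le_sumn i).
  apply: (@etrans _ _ #|[set Ordinal b0]|); last by rewrite cards1.
  apply: eq_card => j; rewrite !inE.
  apply/andP/eqP => [[_ /eqP j0]|->]; first by apply: val_inj.
  by [].
rewrite -(big_mkord xpredT (fun i => (0 < nth 0 mu i : nat))) -(big_nth 0 xpredT (fun x => (0 < x : nat))).
elim: mu hpos => [|x s IH] /=; first by rewrite big_nil.
by move=> /andP[h1 h2]; rewrite big_cons h1 (IH h2).
Qed.


Lemma count_pv N M : (M <= N)%N -> all (fun k => 0 < k)%N mu ->
  #|[set k : {ffun pathvert mu -> 'I_N} |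
      [forall u, forall w, pathadj u w ==> (k u != k w)] && [forall v, k v < M]]|
  = (M ^ size mu * M.-1 ^ (sumn mu - size mu))%N.
Proof.
move=> hMN hpos.
have eT0 : #|[set: pathvert mu]| = sumn mu.
  by rewrite -[RHS]card_pv_all; apply: eq_card => v; rewrite !inE.
have szle : (size mu <= sumn mu)%N.
  by have := subset_leq_card (subsetT [set v : pathvert mu | proot v]); rewrite (card_pv_root hpos) eT0.
case: (posnP N) => [N0|N0].
  have M0 : M = 0%N by move: hMN; rewrite N0; case: M.
  case: (posnP (sumn mu)) => [s0|s0].
    have sz0 : size mu = 0%N by move: szle; rewrite s0; case: (size mu).
    rewrite [in RHS]s0 [in RHS]sz0 /= expn0 mul1n subnn expn0.
    have <- : #|[set: {ffun pathvert mu -> 'I_N}]| = 1%N.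
      by rewrite cardsT card_ffun; move: eT0; rewrite cardsT => ->; rewrite s0.
    apply: eq_card => k; rewrite !inE.
    have e0 : #|[set: pathvert mu]| == 0%N by rewrite eT0 s0.
    move: e0; rewrite cards_eq0 => /eqP e0.
    apply/andP; split; apply/forallP => v; exfalso.
      by move/setP: e0 => /(_ v); rewrite !inE.
    by move/setP: e0 => /(_ v); rewrite !inE.
  have szp : (0 < size mu)%N.
    by move: s0; case: (mu) => //.
  rewrite M0 exp0n // mul0n; apply/eqP; rewrite -leqn0.
  apply: (leq_trans (subset_leq_card (subsetT _))).
  by rewrite cardsT card_ffun; move: eT0; rewrite cardsT => ->; rewrite card_ord N0 exp0n.
have := @count_good (pathvert mu) N M (@ppar) (@proot) (@prk) (@prk_par) hMN setT N0.
move=> /(_ (fun u _ _ => in_setT _)).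
have eT : #|[set: pathvert mu]| = sumn mu.
  by rewrite -[RHS]card_pv_all; apply: eq_card => v; rewrite !inE.
have eR : #|[set u in [set: pathvert mu] | proot u]| = size mu.
  by rewrite -[RHS](card_pv_root hpos); apply: eq_card => v; rewrite !inE.
have eN : #|[set u in [set: pathvert mu] | ~~ proot u]| = (sumn mu - size mu)%N.
  have h := cardsC [set u in [set: pathvert mu] | proot u].
  rewrite eR -cardsT eT in h.
  have -> : #|[set u in [set: pathvert mu] | ~~ proot u]| = #|~: [set u in [set: pathvert mu] | proot u]|.
    by apply: eq_card => v; rewrite !inE.
  move: (#|~: _|) h => a h; lia.
rewrite eR eN setCT cards0 expn0 muln1 => <-.
apply: eq_card => k; rewrite !inE proper_equiv.
apply/andP/forall_inP => [[/forallP H1 /forallP H2] v _|H].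
  by rewrite H2 /=; apply: H1.
split; apply/forallP => v; have /andP[h1 h2] := H v (in_setT v) => //.
Qed.

End PV.

Import GRing.Theory Num.Theory.
Local Open Scope ring_scope.

Definition vv N M (y : rat) : 'I_N -> rat := fun i => if (i < M)%N then y else 0.

Lemma ev_psum N M y k : (M <= N)%N -> (0 < k)%N -> (psum N k).@[vv M y] = M%:R * y ^+ k.
Proof.
move=> hMN k0; rewrite /psum rmorph_sum /=.
under eq_bigr do rewrite rmorphXn /= mevalXU /vv.
transitivity (\sum_(i < N | (i < M)%N) y ^+ k).
  rewrite [RHS]big_mkcond /=; apply: eq_bigr => i _.
  by case: ifP => _ //; rewrite expr0n; case: k k0.
rewrite -(big_ord_widen N (fun _ => y ^+ k) hMN) /=.
by rewrite sumr_const card_ord mulr_natl.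
Qed.

Lemma ev_powersum N M y l : (M <= N)%N -> all (fun k => 0 < k)%N l ->
  (powersum N l).@[vv M y] = M%:R ^+ size l * y ^+ sumn l.
Proof.
move=> hMN; rewrite /powersum; elim: l => [|k l IH] /=.
  by rewrite big_nil meval1 !expr0 mulr1.
move=> /andP[k0 hl]; rewrite big_cons rmorphM /= IH // ev_psum //.
by rewrite exprS exprD; ring.
Qed.

Lemma ev_XP N M y mu : (M <= N)%N -> all (fun k => 0 < k)%N mu ->
  (XP N mu).@[vv M y] = (M ^ size mu * M.-1 ^ (sumn mu - size mu))%:R * y ^+ sumn mu.
Proof.
move=> hMN hpos; rewrite /XP /chromsym rmorph_sum /=.
have hV : #|{: pathvert mu}| = sumn mu.
  transitivity #|[set: pathvert mu]|; first by rewrite cardsT.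
  by rewrite -[RHS](card_pv_all mu); apply: eq_card => v; rewrite !inE.
transitivity (\sum_(k : {ffun pathvert mu -> 'I_N} | [forall u, forall w, pathadj u w ==> (k u != k w)])
   (if [forall v, (k v < M)%N] then y ^+ sumn mu else 0)).
  apply: eq_bigr => k _; rewrite rmorph_prod /=.
  under eq_bigr do rewrite mevalXU /vv.
  case: (boolP [forall v, (k v < M)%N]) => [/forallP H|/forallPn [v hv]].
    by rewrite (eq_bigr (fun _ => y)) ?prodr_const ?hV // => v _; rewrite H.
  by rewrite (bigD1 v) //= ifN // mul0r.
rewrite -big_mkcondr /= sumr_const -[LHS]mulr_natl; congr (_ * _); congr (_%:R).
rewrite -(count_pv hMN hpos); apply: eq_card => k; by rewrite !inE.
Qed.

Lemma poly_zero_from_roots (p : {poly rat}) n : (size p <= n.+1)%N ->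
  (forall M, (M <= n)%N -> p.[M%:R] = 0) -> p = 0.
Proof.
move=> hs H; apply: (@roots_geq_poly_eq0 _ p [seq M%:R | M <- iota 0 n.+1]).
- apply/allP => z /mapP [M]; rewrite mem_iota add0n ltnS => hM ->.
  by rewrite /root H.
- rewrite map_inj_uniq ?iota_uniq // => a b /eqP; rewrite eqr_nat => /eqP.
  done.
- by rewrite size_map size_iota.
Qed.

Lemma poly_zero_inf (p : {poly rat}) : (forall x : rat, x != 1 -> p.[x] = 0) -> p = 0.
Proof.
move=> H; apply: (@roots_geq_poly_eq0 _ p [seq (n.+2)%:R | n <- iota 0 (size p)]).
- apply/allP => z /mapP [n _ ->]; rewrite /root H //.
  by rewrite -[1]/(1%:R) eqr_nat.
- rewrite map_inj_uniq ?iota_uniq // => a b /eqP; rewrite eqr_nat => /eqP [].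
  done.
- by rewrite size_map size_iota.
Qed.

Lemma size_term l d : (l <= d)%N -> (size (('X^l * ('X - 1)^+(d - l))%R : {poly rat}) <= d.+1)%N.
Proof.
move=> hld; have -> : ('X - 1 : {poly rat}) = 'X - 1%:P by rewrite polyC1.
apply: (leq_trans (size_mul_leq _ _)); rewrite size_polyXn size_exp_XsubC.
lia.
Qed.

Lemma natpow (M l d : nat) : (l == 0%N) ==> (d == 0%N) ->
  (M%:R : rat) ^+ l * (M%:R - 1) ^+ (d - l) = (M ^ l * M.-1 ^ (d - l))%:R.
Proof.
move=> hld; case: M => [|m].
  case: l hld => [/= /eqP ->|l _]; first by rewrite !expr0 mulr1.
  by rewrite expr0n /= mul0r exp0n.
by rewrite natrM !natrX mulrSr addrK.
Qed.

Lemma ev_term (x : rat) l d : x != 1 -> (l <= d)%N ->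
  (x - 1) ^+ d * ((x / (x - 1)) ^+ l * (x / (x - 1) - 1) ^+ (d - l)) = x ^+ l.
Proof.
move=> x1 hld; have z0 : x - 1 != 0 by rewrite subr_eq0.
have -> : x / (x - 1) - 1 = (x - 1)^-1.
  by apply: (mulIf z0); rewrite mulrBl divfK // mul1r mulVf // opprB addrCA subrr addr0.
rewrite -{1}(subnKC hld) exprD mulrACA -!exprMn divff // expr1n mulr1 mulrC divfK //.
Qed.

Lemma ev_term2 (x : rat) l d : x != 1 -> (l <= d)%N ->
  (x - 1) ^+ d * (x / (x - 1)) ^+ l = x ^+ l * (x - 1) ^+ (d - l).
Proof.
move=> x1 hld; have z0 : x - 1 != 0 by rewrite subr_eq0.
rewrite -{1}(subnKC hld) exprD mulrAC -exprMn mulrCA divff // mulr1.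
by [].
Qed.

Lemma size_le_sumn (mu : seq nat) : all (fun k => 0 < k)%N mu -> (size mu <= sumn mu)%N.
Proof. elim: mu => //= x s IH /andP[h1 h2]; have := IH h2; lia. Qed.

Lemma sz0_sumn (mu : seq nat) : all (fun k => 0 < k)%N mu -> (size mu == 0%N) ==> (sumn mu == 0%N).
Proof. by case: mu. Qed.

Theorem proposition4p2 (lambda : seq nat) (N : nat) (s : seq (seq nat))
    (a : seq nat -> rat) :
  is_partition lambda -> uniq s -> all is_partition s ->
  (sumn lambda <= N)%N -> all (fun mu => sumn mu <= N)%N s ->
  powersum N lambda = \sum_(mu <- s) a mu *: XP N mu ->
  (\sum_(mu <- s) a mu *: 'X^(size mu) : {poly rat})
    = 'X^(size lambda) * ('X - 1) ^+ (sumn lambda - size lambda).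
Proof.
move=> hlam _ hs hlN hsN H.
have lpos : all (fun k => 0 < k)%N lambda by case/andP: hlam.
have spos : forall mu, mu \in s -> all (fun k => 0 < k)%N mu.
  by move=> mu /(allP hs) /andP[].
have E1 : forall M y, (M <= N)%N -> M%:R ^+ size lambda * y ^+ sumn lambda =
    \sum_(mu <- s) a mu * ((M ^ size mu * M.-1 ^ (sumn mu - size mu))%:R * y ^+ sumn mu).
  move=> M y hMN; have := congr1 (meval (@vv N M y)) H.
  rewrite ev_powersum // rmorph_sum /= => ->.
  rewrite big_seq [RHS]big_seq; apply: eq_bigr => mu hmu.
  by rewrite mevalZ ev_XP // spos.
have E2 : forall y : rat,
  (\sum_(mu <- s) (a mu * y ^+ sumn mu) *: ('X^(size mu) * ('X - 1) ^+ (sumn mu - size mu))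
     - (y ^+ sumn lambda) *: 'X^(size lambda) : {poly rat}) = 0.
  move=> y; apply: (@poly_zero_from_roots _ N).
    apply: (leq_trans (size_polyD _ _)); rewrite geq_max size_polyN; apply/andP; split.
      rewrite big_seq; apply: (big_ind (fun p : {poly rat} => size p <= N.+1)%N); first by rewrite size_poly0.
        move=> p q hp hq; apply: (leq_trans (size_polyD _ _)); by rewrite geq_max hp hq.
      move=> mu hmu; apply: (leq_trans (size_scale_leq _ _)).
      apply: (leq_trans (size_term (size_le_sumn (spos _ hmu)))).
      by rewrite ltnS; apply: (allP hsN).
    apply: (leq_trans (size_scale_leq _ _)); rewrite size_polyXn ltnS.
    exact: leq_trans (size_le_sumn lpos) hlN.
  move=> M hM; rewrite hornerD hornerN horner_sum hornerZ hornerXn.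
  apply/eqP; rewrite subr_eq0; apply/eqP; rewrite [RHS]mulrC (E1 M y hM).
  rewrite big_seq [RHS]big_seq; apply: eq_bigr => mu hmu.
  rewrite hornerZ hornerM hornerXn horner_exp hornerD hornerN hornerX -polyC1 hornerC.
  rewrite natpow ?sz0_sumn ?spos //; ring.


apply/eqP; rewrite -subr_eq0; apply/eqP; apply: poly_zero_inf => x x1.
have := congr1 (fun p => p.[x / (x - 1)]) (E2 (x - 1)); rewrite horner0 => <-.
rewrite !(hornerD, hornerN, horner_sum) hornerZ hornerXn hornerM hornerXn.
rewrite horner_exp hornerD hornerN hornerX -polyC1 hornerC.
congr (_ - _); last by rewrite ev_term2 // (size_le_sumn lpos).
rewrite big_seq [RHS]big_seq; apply: eq_bigr => mu hmu.
rewrite hornerZ hornerXn hornerZ hornerM hornerXn horner_exp hornerD hornerN hornerX hornerC.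
by rewrite -mulrA ev_term // size_le_sumn // spos.
Qed.
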